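(* Let $\alpha\in(0,1)$, $R>0$, and consider the initial state $(x_O,y_O,y_T)$ at time $0$. Let $C=\{(x,y):(x-x_O)^2+(y-y_O)^2=R^2\}$ be the boundary of the observation disk and $\mathrm{DL}=\{(\pm s\alpha,\,y_T+s\sqrt{1-\alpha^2}):s\ge0\}$ the Decision Line. If $C\cap\mathrm{DL}$ consists of exactly two points, then the state belongs to $\mathscr B_2\cup\mathscr B_3$; consequently the optimal observation time is non-zero.
   Context: Target: position $(0,y_T(t))$, $\dot y_T=1$, $y_T(0)=y_T$. Observer: position $(x_O(t),y_O(t))$ starting at $(x_O,y_O)$, $\dot x_O=\alpha\cos\psi(t)$, $\dot y_O=\alpha\sin\psi(t)$, heading $\psi:[0,\infty)\to\mathbb R$ a measurable control. Observation disk: closed disk of radius $R$ centered at the observer. For a control, $t_2=\inf\{t\ge0:x_O(t)^2+(y_O(t)-y_T(t))^2\le R^2\}$, $t_f=\inf\{t\ge t_2:x_O(t)^2+(y_O(t)-y_T(t))^2>R^2\}$, and $t_{\text{obs}}=t_f-t_2$ (taken to be $0$ if no contact occurs). The optimal observation time $t^*_{\text{obs}}$ is the supremum of $t_{\text{obs}}$ over all controls. The Decision Line is the set of points $Z$ whose Apollonius circle $\{P:|PZ|=\alpha|PT|\}$ with the initial target position $T=(0,y_T)$ is tangent to the target's path $\{(0,y):y\ge y_T\}$, which is the union of the two rays given. $\mathscr B_1=\{t^*_{\text{obs}}=0\}$, $\mathscr B_3=\{t^*_{\text{obs}}=2R/(1-\alpha)\}$, $\mathscr B_2=\{0<t^*_{\text{obs}}<2R/(1-\alpha)\}$.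 *)

(* Defs.v *)
From HB Require Import structures.
From mathcomp Require Import all_boot all_order all_algebra.
From mathcomp Require Import all_classical all_reals all_analysis.
Set Implicit Arguments. Unset Strict Implicit. Unset Printing Implicit Defensive.
Import Order.TTheory GRing.Theory Num.Theory.
Import numFieldNormedType.Exports.
Local Open Scope classical_set_scope.
Local Open Scope ring_scope.

Section Game.
Variable R : realType.

Definition xO_traj (alpha xO : R) (psi : R -> R) (t : R) : R :=
  xO + Rintegral (@lebesgue_measure R) `[0, t] (fun s => alpha * cos (psi s)).
Definition yO_traj (alpha yO : R) (psi : R -> R) (t : R) : R :=
  yO + Rintegral (@lebesgue_measure R) `[0, t] (fun s => alpha * sin (psi s)).
(* Target: (0, yT + t). Squared observer-target distance at time t. *)
Definition dist2 (alpha xO yO yT : R) (psi : R -> R) (t : R) : R :=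
  (xO_traj alpha xO psi t) ^+ 2 + (yO_traj alpha yO psi t - (yT + t)) ^+ 2.

Local Open Scope ereal_scope.
(* t_2 : first time of contact (+oo if none) *)
Definition t2_time (alpha Rd xO yO yT : R) (psi : R -> R) : \bar R :=
  ereal_inf (EFin @` [set t : R | (0 <= t)%R /\ (dist2 alpha xO yO yT psi t <= Rd ^+ 2)%R]).
Definition tf_time (alpha Rd xO yO yT : R) (psi : R -> R) : \bar R :=
  ereal_inf (EFin @` [set t : R | t2_time alpha Rd xO yO yT psi <= t%:E /\
                                  (Rd ^+ 2 < dist2 alpha xO yO yT psi t)%R]).
Definition t_obs (alpha Rd xO yO yT : R) (psi : R -> R) : \bar R :=
  if t2_time alpha Rd xO yO yT psi == +oo then 0
  else tf_time alpha Rd xO yO yT psi - t2_time alpha Rd xO yO yT psi.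
Definition t_obs_opt (alpha Rd xO yO yT : R) : \bar R :=
  ereal_sup [set t_obs alpha Rd xO yO yT psi | psi in
             [set psi : R -> R | measurable_fun (`[0%R, +oo[ : set R) psi]].
Local Close Scope ereal_scope.

Definition obs_circle (Rd xO yO : R) : set (R * R) :=
  [set p | (p.1 - xO) ^+ 2 + (p.2 - yO) ^+ 2 = Rd ^+ 2].
Definition decision_line (alpha yT : R) : set (R * R) :=
  [set p | exists s : R, 0 <= s /\
     (p = (s * alpha, yT + s * Num.sqrt (1 - alpha ^+ 2)) \/
      p = (- (s * alpha), yT + s * Num.sqrt (1 - alpha ^+ 2)))].

Definition B2 (alpha Rd xO yO yT : R) : Prop :=
  (0 < t_obs_opt alpha Rd xO yO yT < (2 * Rd / (1 - alpha))%:E)%E.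
Definition B3 (alpha Rd xO yO yT : R) : Prop :=
  t_obs_opt alpha Rd xO yO yT = (2 * Rd / (1 - alpha))%:E.
End Game.

(* Main.v *)
Require Import Defs.
From HB Require Import structures.
From mathcomp Require Import all_boot all_order all_algebra.
From mathcomp Require Import all_classical all_reals all_analysis.
From mathcomp Require Import ring lra.
Import Order.TTheory GRing.Theory Num.Theory.
Import numFieldNormedType.Exports.
Local Open Scope classical_set_scope.
Local Open Scope ring_scope.

Section H.
Variable R : realType.
Notation mu := (@lebesgue_measure R).

Lemma integ_bdd (g : R -> R) (b : R) (c : R) :
  measurable_fun `[0, b] g -> (forall x, 0 <= x <= b -> -c <= g x <= c) ->
  mu.-integrable `[0, b] (EFin \o g).
Proof.
move=> mg gb; apply: measurable_bounded_integrable => //.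
- have := lebesgue_measure_itv `[0, b]; rewrite /= => ->.
  by case: ifP => _; rewrite ?ltry.
- exists c; split; first exact: num_real.
  move=> x x1 y yb /=; rewrite ler_norml.
  have := gb y; rewrite /= in_itv /= in yb; move=> /(_ yb); lra.
Qed.

Lemma meas_sinpsi (alpha : R) (psi : R -> R) (b : R) :
  measurable_fun (`[0%R, +oo[ : set R) psi ->
  measurable_fun `[0, b] (fun s => alpha * sin (psi s)).
Proof.
move=> mpsi; apply: measurable_realfun.measurable_funM => //.
apply: measurableT_comp; first exact: measurable_realfun.continuous_measurable_fun (@continuous_sin R).
apply: measurable_funS mpsi => //.
move=> x; rewrite /= !in_itv /= => /andP[]; by move=> ->.
Qed.

Lemma Y_incr (alpha : R) (psi : R -> R) (a b : R) :
  0 < alpha -> measurable_fun (`[0%R, +oo[ : set R) psi -> 0 <= a -> a <= b ->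
  Rintegral mu `[0, b] (fun s => alpha * sin (psi s)) -
  Rintegral mu `[0, a] (fun s => alpha * sin (psi s)) <= alpha * (b - a).
Proof.
move=> ha mpsi a0 ab.
have ig : mu.-integrable `[0, b] (EFin \o (fun s => alpha * sin (psi s))).
  apply: (@integ_bdd _ _ alpha); first exact: meas_sinpsi.
  move=> x _; have := sin_geN1 (psi x); have := sin_le1 (psi x).
  move=> h1 h2; apply/andP; split; nra.
rewrite Rintegral_itvB //; try by rewrite bnd_simp.
apply: le_trans (_ : Rintegral mu `]a, b] (fun _ => alpha) <= _).
  apply: le_Rintegral => //.
  - apply: integrableS ig => //; apply: subset_itvr; rewrite bnd_simp; lra.
  - apply: integrableS (_ : mu.-integrable `[0, b] (EFin \o (fun _ => alpha))) => //.
      apply: subset_itvr; rewrite bnd_simp; lra.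
    apply: (@integ_bdd _ _ alpha) => // x _; apply/andP; split; lra.
  - move=> x _; have := sin_le1 (psi x); nra.
rewrite Rintegral_cst //.
have := lebesgue_measure_itv `]a, b]; rewrite /= => ->.
rewrite lte_fin; case: ltgtP => ab' /=.
- by rewrite mulrC.
- rewrite mulr0; apply: mulr_ge0; lra.
- by rewrite ab' subrr mulr0.
Qed.

Lemma tobs_le (alpha Rd xO yO yT : R) (psi : R -> R) :
  0 < alpha -> alpha < 1 -> 0 < Rd ->
  measurable_fun (`[0%R, +oo[ : set R) psi ->
  (t_obs alpha Rd xO yO yT psi <= (2 * Rd / (1 - alpha))%:E)%E.
Proof.
move=> ha0 ha1 hR mpsi.
set B := 2 * Rd / (1 - alpha).
have hB : B * (1 - alpha) = 2 * Rd by rewrite /B divfK //; lra.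
have B0 : 0 < B by rewrite /B divr_gt0 //; lra.
rewrite /t_obs; case: ifP => [_|]; first by rewrite lee_fin ltW.
set S := [set t : R | 0 <= t /\ dist2 alpha xO yO yT psi t <= Rd ^+ 2].
have [S0|Sn0] := eqVneq S set0.
  by rewrite /t2_time -/S S0 image_set0 ereal_inf0 eqxx.
have Sne : S !=set0 by apply/set0P.
have Slb : has_lbound S by exists 0 => x [].
have t2E : t2_time alpha Rd xO yO yT psi = (inf S)%:E by rewrite /t2_time ereal_inf_EFin.
move=> _; rewrite t2E.
have r0 : 0 <= inf S by apply: lb_le_inf => // x [].
suff : (tf_time alpha Rd xO yO yT psi <= (inf S + B)%:E)%E.
  by rewrite EFinD leeBlDl.
apply/lee_addgt0Pr => e e0.
have e2 : 0 < e / 2 by lra.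
have [t' [t'0 ht'] t'lt] := inf_adherent e2 (conj Sne Slb).
have rt' : inf S <= t' by apply: ge_inf.
apply: (@le_trans _ _ (t' + B + e / 2)%:E); last by rewrite -!EFinD lee_fin; lra.
rewrite /tf_time; apply: ereal_inf_lbound; exists (t' + B + e / 2) => //.
split; first by rewrite t2E lee_fin; lra.
move: ht'; rewrite /dist2 /yO_traj.
have := @Y_incr alpha psi t' (t' + B + e / 2) ha0 mpsi t'0.
set I1 := Rintegral mu `[0, t' + B + e / 2] (fun s => alpha * sin (psi s)).
set I0 := Rintegral mu `[0, t'] (fun s => alpha * sin (psi s)).
set X0 := xO_traj alpha xO psi t'; set X1 := xO_traj alpha xO psi (t' + B + e / 2).
move=> /(_ ltac:(lra)) hI hd.
have hv : yO + I0 - (yT + t') <= Rd.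
  have : (yO + I0 - (yT + t')) ^+ 2 <= Rd ^+ 2.
    by apply: le_trans hd; rewrite lerDr sqr_ge0.
  move=> h; nra.
have : yO + I1 - (yT + (t' + B + e / 2)) < - Rd.
  have : alpha * (B + e / 2) <= B + e / 2 - e / 2 * (1 - alpha) - 2 * Rd.
    have hB' : B - alpha * B = 2 * Rd by rewrite -hB; ring.
    lra.
  have hp : 0 < e / 2 * (1 - alpha) by apply: mulr_gt0; lra.
  move: hI; have -> : t' + B + e / 2 - t' = B + e / 2 by ring.
  move=> hI h; lra.
move=> h; have : Rd ^+ 2 < (yO + I1 - (yT + (t' + B + e / 2))) ^+ 2 by nra.
move=> h2; apply: lt_le_trans h2 _; rewrite lerDr sqr_ge0 //.
Qed.

Definition gq (P1 v1 P2 v2 x : R) := (P1 + v1 * x) ^+ 2 + (P2 + v2 * x) ^+ 2.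

Lemma gq_convex P1 v1 P2 v2 (s x t Q : R) : s <= x <= t ->
  gq P1 v1 P2 v2 s <= Q -> gq P1 v1 P2 v2 t <= Q -> gq P1 v1 P2 v2 x <= Q.
Proof.
move=> /andP[sx xt] hs ht.
have id : (t - x) * gq P1 v1 P2 v2 s + (x - s) * gq P1 v1 P2 v2 t
   - (t - s) * gq P1 v1 P2 v2 x = (v1 ^+ 2 + v2 ^+ 2) * ((t - x) * (x - s) * (t - s)).
  rewrite /gq; ring.
have h0 : 0 <= (v1 ^+ 2 + v2 ^+ 2) * ((t - x) * (x - s) * (t - s)).
  apply: mulr_ge0; first by apply: addr_ge0; apply: sqr_ge0.
  apply: mulr_ge0; [apply: mulr_ge0|]; lra.
have [st|st] := ltP s t.
  have h1 : (t - s) * gq P1 v1 P2 v2 x <= (t - s) * Q.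
    have : (t - x) * gq P1 v1 P2 v2 s <= (t - x) * Q by apply: ler_wpM2l; lra.
    have : (x - s) * gq P1 v1 P2 v2 t <= (x - s) * Q by apply: ler_wpM2l; lra.
    have : (t - x) * Q + (x - s) * Q = (t - s) * Q by ring.
    lra.
  by rewrite ler_pM2l in h1; lra.
have -> : x = t by lra.
done.
Qed.

Lemma gq_lip P1 v1 P2 v2 (M x y : R) : 0 <= x <= M -> 0 <= y <= M ->
  let L := 2 * `|P1 * v1 + P2 * v2| + 2 * M * (v1 ^+ 2 + v2 ^+ 2) + 1 in
  exists K, gq P1 v1 P2 v2 x - gq P1 v1 P2 v2 y = (x - y) * K /\ - L <= K <= L.
Proof.
move=> /andP[x0 xM] /andP[y0 yM] L.
exists (2 * (P1 * v1 + P2 * v2) + (v1 ^+ 2 + v2 ^+ 2) * (x + y)); split.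
  rewrite /gq; ring.
have hn : 0 <= v1 ^+ 2 + v2 ^+ 2 by apply: addr_ge0; apply: sqr_ge0.
have h1 : 0 <= (v1 ^+ 2 + v2 ^+ 2) * (x + y) by apply: mulr_ge0 => //; lra.
have h2 : (v1 ^+ 2 + v2 ^+ 2) * (x + y) <= 2 * M * (v1 ^+ 2 + v2 ^+ 2).
  rewrite [_ * (v1 ^+ 2 + _)]mulrC; apply: ler_wpM2l => //; lra.
have := ler_norm (P1 * v1 + P2 * v2); have := ler_normr (P1 * v1 + P2 * v2).
rewrite /L; move=> _ h3.
have h4 : - `|P1 * v1 + P2 * v2| <= P1 * v1 + P2 * v2.
  by rewrite lerNl -normrN ler_norm.
apply/andP; split; lra.
Qed.

Lemma small_eps (d : R) : 0 < d -> exists e, [/\ 0 < e, e <= 1 & e <= d].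
Proof. move=> d0; have [h|h] := leP d 1; [exists d | exists 1]; split => //; lra. Qed.

Lemma Rint_cst0 (c tau : R) : 0 <= tau -> Rintegral mu `[0, tau] (fun _ => c) = c * tau.
Proof.
move=> t0; rewrite Rintegral_cst //.
have := lebesgue_measure_itv `[0, tau]; rewrite /= => ->.
rewrite lte_fin; case: ltgtP => h /=.
- by rewrite subr0.
- lra.
- by rewrite h.
Qed.

Lemma dist2_cst (alpha xO yO yT th tau : R) : 0 <= tau ->
  dist2 alpha xO yO yT (fun _ => th) tau =
  gq xO (alpha * cos th) (yO - yT) (alpha * sin th - 1) tau.
Proof.
move=> t0; rewrite /dist2 /xO_traj /yO_traj !Rint_cst0 // /gq.
by congr (_ + _ ^+ 2); ring.
Qed.

Lemma tobs_pos (alpha Rd xO yO yT th t : R) : 0 < t ->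
  dist2 alpha xO yO yT (fun _ => th) t < Rd ^+ 2 ->
  (0 < t_obs alpha Rd xO yO yT (fun _ => th))%E.
Proof.
move=> t0 hgt.
set g := gq xO (alpha * cos th) (yO - yT) (alpha * sin th - 1).
have dE : forall tau, 0 <= tau -> dist2 alpha xO yO yT (fun _ => th) tau = g tau.
  by move=> tau tau0; rewrite dist2_cst.
rewrite dE in hgt; last lra.
set S := [set t : R | 0 <= t /\ dist2 alpha xO yO yT (fun _ => th) t <= Rd ^+ 2].
have St : S t by split; [lra | rewrite dE; lra].
have Sne : S !=set0 by exists t.
have Slb : has_lbound S by exists 0 => x [].
have t2E : t2_time alpha Rd xO yO yT (fun _ => th) = (inf S)%:E
  by rewrite /t2_time ereal_inf_EFin.
have r0 : 0 <= inf S by apply: lb_le_inf => // x [].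
have rt : inf S <= t by apply: ge_inf.
set M := t + 2.
set L := 2 * `|xO * (alpha * cos th) + (yO - yT) * (alpha * sin th - 1)| +
  2 * M * ((alpha * cos th) ^+ 2 + (alpha * sin th - 1) ^+ 2) + 1.
have L0 : 0 < L.
  have : 0 <= 2 * M * ((alpha * cos th) ^+ 2 + (alpha * sin th - 1) ^+ 2).
    by apply: mulr_ge0; [rewrite /M; lra | apply: addr_ge0; apply: sqr_ge0].
  have := normr_ge0 (xO * (alpha * cos th) + (yO - yT) * (alpha * sin th - 1)).
  rewrite /L; lra.
have lip : forall x y, 0 <= x <= M -> 0 <= y <= M ->
    exists K, g x - g y = (x - y) * K /\ - L <= K <= L.
  by move=> x y hx hy; exact: (gq_lip xO (alpha * cos th) (yO - yT) (alpha * sin th - 1) M x y hx hy).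
have gr : g (inf S) <= Rd ^+ 2.
  rewrite leNgt; apply/negP => hr.
  have hd : 0 < (g (inf S) - Rd ^+ 2) / L by apply: divr_gt0; lra.
  have [e [e0 e1 ed]] := small_eps _ hd.
  have [s [s0 hs] slt] := inf_adherent e0 (conj Sne Slb).
  have rs : inf S <= s by apply: ge_inf.
  have [K [hK /andP[K1 K2]]] := lip s (inf S) (ltac:(apply/andP; rewrite /M; lra))
                                   (ltac:(apply/andP; rewrite /M; lra)).
  rewrite dE // in hs.
  have : (s - inf S) * K >= - ((s - inf S) * L).
    rewrite -mulrN; apply: ler_wpM2l; lra.
  have : (s - inf S) * L < e * L by rewrite ltr_pM2r //; lra.
  have : e * L <= g (inf S) - Rd ^+ 2.
    by rewrite -(ler_pdivlMr _ _ L0).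
  lra.
have hd : 0 < (Rd ^+ 2 - g t) / L by apply: divr_gt0; lra.
have [e [e0 e1 ed]] := small_eps _ hd.
have tf_ge : ((t + e)%:E <= tf_time alpha Rd xO yO yT (fun _ => th))%E.
  apply/ereal_infP => _ [tau [htau1 htau2] <-].
  rewrite t2E lee_fin in htau1.
  rewrite dE in htau2; last lra.
  rewrite lee_fin leNgt; apply/negP => ht.
  have [tt|tt] := leP tau t.
    have := @gq_convex _ _ _ _ (inf S) tau t (Rd ^+ 2) (ltac:(apply/andP; lra)) gr (ltW hgt).
    rewrite -/g; lra.
  have [K [hK /andP[K1 K2]]] := lip tau t (ltac:(apply/andP; rewrite /M; lra))
                                   (ltac:(apply/andP; rewrite /M; lra)).
  have : (tau - t) * K <= (tau - t) * L by apply: ler_wpM2l; lra.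
  have : (tau - t) * L <= e * L by apply: ler_wpM2r; lra.
  have : e * L <= Rd ^+ 2 - g t by rewrite -(ler_pdivlMr _ _ L0).
  lra.
rewrite /t_obs t2E /=.
apply: (@lt_le_trans _ _ ((t + e)%:E - (inf S)%:E)%E).
  by rewrite -EFinB lte_fin; lra.
by rewrite EFinN; apply: leeD2r.
Qed.

Lemma dl_prop (alpha yT : R) (z : R * R) : 0 < alpha -> decision_line alpha yT z ->
  0 <= z.2 - yT /\ Num.sqrt (1 - alpha ^+ 2) * `|z.1| = alpha * (z.2 - yT).
Proof.
move=> a0 [s [s0 [->|->]]] /=; (have sa : 0 <= s * alpha by apply: mulr_ge0; lra);
  (have b0 := sqrtr_ge0 (1 - alpha ^+ 2)); rewrite ?normrN ger0_norm //;
  (split; [rewrite (_ : _ - yT = s * Num.sqrt (1 - alpha ^+ 2)); [exact: mulr_ge0 | ring] | ring]).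
Qed.

Lemma find_angle (c s : R) : c ^+ 2 + s ^+ 2 = 1 -> exists th, cos th = c /\ sin th = s.
Proof.
move=> h.
have c1 : -1 <= c <= 1.
  have : c ^+ 2 <= 1 by have := sqr_ge0 s; lra.
  move=> hc; apply/andP; split; nra.
have sE : Num.sqrt (1 - c ^+ 2) = `|s| by rewrite (_ : 1 - c ^+ 2 = s ^+ 2) ?sqrtr_sqr //; lra.
have [s0|s0] := leP 0 s.
  exists (acos c); split; first by rewrite acosK // in_itv.
  by rewrite sin_acos // sE ger0_norm.
exists (- acos c); split; first by rewrite cosN acosK // in_itv.
by rewrite sinN sin_acos // sE ltr0_norm // opprK.
Qed.
Lemma sq_le (be a x y : R) : 0 <= be * `|a| -> be * `|a| <= x * y ->
  be ^+ 2 * a ^+ 2 <= x ^+ 2 * y ^+ 2.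
Proof.
move=> h0 h1; have := ler_pM h0 h0 h1 h1.
by rewrite -expr2 -expr2 !exprMn real_normK ?num_real.
Qed.
End H.

Theorem lemma9 (R : realType) (alpha Rd xO yO yT : R)
  (ha0 : 0 < alpha) (ha1 : alpha < 1) (hR : 0 < Rd)
  (htwo : exists p q : R * R, p <> q /\
     obs_circle Rd xO yO `&` decision_line alpha yT = [set p] `|` [set q]) :
  (B2 alpha Rd xO yO yT \/ B3 alpha Rd xO yO yT) /\
  (t_obs_opt alpha Rd xO yO yT <> 0)%E.
Proof.
have [th [t [t0 ht]]] : exists th t, 0 < t /\
    dist2 alpha xO yO yT (fun _ => th) t < Rd ^+ 2.
  case: htwo => -[p1 p2] [[q1 q2] [hpq hset]].
  have Pp : (obs_circle Rd xO yO `&` decision_line alpha yT) (p1, p2).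
    by rewrite hset; left.
  have Pq : (obs_circle Rd xO yO `&` decision_line alpha yT) (q1, q2).
    by rewrite hset; right.
  case: Pp => /= Cp /(@dl_prop R alpha yT _ ha0) /= [p0 pe].
  case: Pq => /= Cq /(@dl_prop R alpha yT _ ha0) /= [q0 qe].
  rewrite /obs_circle /= in Cp Cq.
  set be := Num.sqrt (1 - alpha ^+ 2) in pe qe.
  have be0 : 0 < be by rewrite sqrtr_gt0; nra.
  have be2 : be ^+ 2 = 1 - alpha ^+ 2 by rewrite sqr_sqrtr //; nra.
  set a := (p1 + q1) / 2.
  set b := (p2 + q2) / 2 - yT.
  have dpq : 0 < (p1 - q1) ^+ 2 + (p2 - q2) ^+ 2.
    rewrite lt_neqAle addr_ge0 ?sqr_ge0 // andbT; apply/eqP => h0.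
    apply: hpq.
    have h1 : (p1 - q1) ^+ 2 = 0 by have := sqr_ge0 (p1 - q1); have := sqr_ge0 (p2 - q2); lra.
    have h2 : (p2 - q2) ^+ 2 = 0 by have := sqr_ge0 (p1 - q1); have := sqr_ge0 (p2 - q2); lra.
    move/eqP: h1; rewrite sqrf_eq0 subr_eq0 => /eqP ->.
    by move/eqP: h2; rewrite sqrf_eq0 subr_eq0 => /eqP ->.
  have inside : (xO - a) ^+ 2 + (yO - yT - b) ^+ 2 < Rd ^+ 2.
    have eqm : (xO - a) ^+ 2 + (yO - yT - b) ^+ 2 =
      ((p1 - xO) ^+ 2 + (p2 - yO) ^+ 2 + ((q1 - xO) ^+ 2 + (q2 - yO) ^+ 2)) / 2
      - ((p1 - q1) ^+ 2 + (p2 - q2) ^+ 2) / 4.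
      by rewrite /a /b; field.
    rewrite eqm Cp Cq; lra.
  have b0 : 0 < b.
    rewrite lt_neqAle; apply/andP; split; last by rewrite /b; lra.
    apply/eqP => hb; apply: hpq.
    have hp2 : p2 - yT = 0 by rewrite /b in hb; lra.
    have hq2 : q2 - yT = 0 by rewrite /b in hb; lra.
    rewrite hp2 mulr0 in pe; rewrite hq2 mulr0 in qe.
    have : `|p1| = 0 by move/eqP: pe; rewrite mulf_eq0 gt_eqF //= => /eqP.
    have : `|q1| = 0 by move/eqP: qe; rewrite mulf_eq0 gt_eqF //= => /eqP.
    move=> /normr0_eq0 -> /normr0_eq0 ->.
    by congr pair; lra.
  have cone : be ^+ 2 * a ^+ 2 <= alpha ^+ 2 * b ^+ 2.
    have h1 : be * `|a| <= alpha * b.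
      have : `|a| <= (`|p1| + `|q1|) / 2.
        have := ler_norm p1; have := ler_norm q1.
        have := ler_norm (- p1); have := ler_norm (- q1); rewrite !normrN.
        by move=> *; rewrite ler_norml /a; apply/andP; split; lra.
      move=> h; have : be * `|a| <= be * ((`|p1| + `|q1|) / 2) by apply: ler_wpM2l => //; lra.
      have : be * ((`|p1| + `|q1|) / 2) = alpha * b by rewrite /b; rewrite mulrA mulrDr pe qe; field.
      lra.
    have h0 : 0 <= be * `|a| by apply: mulr_ge0 => //; lra.
    exact: (@sq_le R be a alpha b h0 h1).
  set D := alpha ^+ 2 * b ^+ 2 - be ^+ 2 * a ^+ 2.
  have D0 : 0 <= D by rewrite /D; lra.
  set d := Num.sqrt D.
  have d0 : 0 <= d := sqrtr_ge0 D.
  have d2 : d ^+ 2 = D by rewrite sqr_sqrtr.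
  set t := (b + d) / be ^+ 2.
  have be2p : 0 < be ^+ 2 by apply: exprn_gt0.
  have t0 : 0 < t by apply: divr_gt0 => //; lra.
  have tq : a ^+ 2 + (t - b) ^+ 2 = alpha ^+ 2 * t ^+ 2.
    have tE : t * be ^+ 2 = b + d by rewrite /t divfK // gt_eqF.
    have : be ^+ 2 * t ^+ 2 - 2 * b * t + (a ^+ 2 + b ^+ 2) = 0.
      have : be ^+ 2 * (be ^+ 2 * t ^+ 2 - 2 * b * t + (a ^+ 2 + b ^+ 2)) = 0.
        have -> : be ^+ 2 * (be ^+ 2 * t ^+ 2 - 2 * b * t + (a ^+ 2 + b ^+ 2)) =
          (t * be ^+ 2) ^+ 2 - 2 * b * (t * be ^+ 2) + be ^+ 2 * (a ^+ 2 + b ^+ 2) by ring.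
        rewrite tE.
        have -> : (b + d) ^+ 2 - 2 * b * (b + d) + be ^+ 2 * (a ^+ 2 + b ^+ 2) =
          d ^+ 2 - b ^+ 2 + be ^+ 2 * (a ^+ 2 + b ^+ 2) by ring.
        rewrite d2 /D be2; ring.
      by move/eqP; rewrite mulf_eq0 gt_eqF //= => /eqP.
    rewrite be2 => h; lra.
  have at0 : alpha * t != 0 by rewrite mulf_neq0 // gt_eqF.
  have cs : (- a / (alpha * t)) ^+ 2 + ((t - b) / (alpha * t)) ^+ 2 = 1.
    by rewrite !expr_div_n sqrrN -mulrDl tq -exprMn divff // expf_neq0.
  have [th [cth sth]] := @find_angle R _ _ cs.
  exists th, t; split => //.
  rewrite dist2_cst; last lra.
  rewrite /gq cth sth.
  have an : alpha != 0 by rewrite gt_eqF.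
  have tn : t != 0 by rewrite gt_eqF.
  have -> : xO + alpha * (- a / (alpha * t)) * t = xO - a.
    by field; rewrite tn an.
  have -> : yO - yT + (alpha * ((t - b) / (alpha * t)) - 1) * t = yO - yT - b.
    by field; rewrite tn an.
  exact: inside.
have pos : (0 < t_obs alpha Rd xO yO yT (fun _ => th))%E by exact: tobs_pos ht.
have ub : (t_obs_opt alpha Rd xO yO yT <= (2 * Rd / (1 - alpha))%:E)%E.
  apply/ereal_supP => _ [psi mpsi <-]; exact: tobs_le.
have lb : (0 < t_obs_opt alpha Rd xO yO yT)%E.
  apply: (lt_le_trans pos); apply: ereal_sup_ubound; exists (fun _ => th) => //.
  exact: measurable_cst.
split; last by move=> h; rewrite h ltxx in lb.
move: ub; rewrite le_eqVlt => /predU1P[h|h]; [right | left] => //.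
by rewrite /B2 lb h.
Qed.
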